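(* Let $B,C,D\in\mathbb{C}$. If all roots of the polynomial $x^3+Bx^2+Cx+D$ have the same absolute value, then $C|C|^2=\overline{B}|B|^2D$.
   Context: $\overline{z}$ denotes complex conjugation. *)

(* Defs.v *)
From mathcomp Require Import all_boot all_order all_algebra.
Set Implicit Arguments. Unset Strict Implicit. Unset Printing Implicit Defensive.
Import Order.TTheory GRing.Theory Num.Theory.
Local Open Scope ring_scope.

Definition cubic (F : numClosedFieldType) (B C D : F) : {poly F} :=
  'X^3 + B *: 'X^2 + C *: 'X + D%:P.

(* Main.v *)
Require Import Defs.
From mathcomp Require Import all_boot all_order all_algebra ring.
Import Order.TTheory GRing.Theory Num.Theory.
Local Open Scope ring_scope.
Lemma sz (F : numClosedFieldType) (B C D : F) : size (cubic B C D) = 4%N.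
Proof.
rewrite /cubic -addrA -addrA size_addl ?size_polyXn //.
rewrite (leq_ltn_trans (size_add _ _)) // gtn_max.
rewrite (leq_ltn_trans (size_scale_leq _ _)) ?size_polyXn //=.
rewrite (leq_ltn_trans (size_add _ _)) // gtn_max size_polyC.
rewrite (leq_ltn_trans (size_scale_leq _ _)) ?size_polyX //=.
by case: (_ != _).
Qed.
Lemma monic_c (F : numClosedFieldType) (B C D : F) : lead_coef (cubic B C D) = 1.
Proof. by rewrite lead_coefE sz /cubic !coefE /=; ring. Qed.

Lemma fact3 (F : numClosedFieldType) (B C D : F) :
  exists a b c, cubic B C D = ('X - a%:P) * ('X - b%:P) * ('X - c%:P).
Proof.
have [r Hr] := closed_field_poly_normal (cubic B C D).
move: (Hr); rewrite monic_c scale1r => Hr'.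
have := congr1 (fun p : {poly F} => size p) Hr'; rewrite /= sz size_prod_XsubC.
case: r Hr Hr' => [|a [|b [|c [|? ?]]]] //= _ Hr' _.
exists a, b, c. by rewrite Hr' !big_cons big_nil mulr1 mulrA.
Qed.

Theorem lemma4p5 (F : numClosedFieldType) (B C D : F) :
  (forall x y : F, root (cubic B C D) x -> root (cubic B C D) y -> `|x| = `|y|) ->
  C * `|C| ^+ 2 = B^* * `|B| ^+ 2 * D.
Proof.
move=> H.
have [a [b [c E]]] := fact3 F B C D.
have ra : root (cubic B C D) a by rewrite E /root !hornerE subrr !mul0r.
have rb : root (cubic B C D) b by rewrite E /root !hornerE subrr !(mul0r,mulr0).
have rc : root (cubic B C D) c by rewrite E /root !hornerE subrr !(mul0r,mulr0).
have Hb := H _ _ ra rb; have Hc := H _ _ ra rc.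
have E2 : cubic B C D = 'X^3 + (-(a+b+c)) *: 'X^2 + (a*b+a*c+b*c) *: 'X + (-(a*b*c))%:P.
  rewrite E -!mul_polyC !polyCD !polyCN !polyCM; ring.
have k2 := congr1 (fun p : {poly F} => p`_2) E2; have k1 := congr1 (fun p : {poly F} => p`_1) E2;
have k0 := congr1 (fun p : {poly F} => p`_0) E2.
rewrite /cubic /= !coefE /= in k2 k1 k0.
have eB : B = -(a+b+c) by move: k2; rewrite !(add0r,addr0,mulr0,mulr1).
have eC : C = a*b+a*c+b*c by move: k1; rewrite !(add0r,addr0,mulr0,mulr1).
have eD : D = -(a*b*c) by move: k0; rewrite !(add0r,addr0,mulr0,mulr1).
rewrite !normCK eB eC eD.
have [a0|an0] := eqVneq a 0.
  have b0 : b = 0 by apply/eqP; rewrite -normr_eq0 -Hb a0 normr0.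
  have c0 : c = 0 by apply/eqP; rewrite -normr_eq0 -Hc a0 normr0.
  by rewrite a0 b0 c0 !(mul0r, mulr0, addr0, oppr0).
have bn0 : b != 0 by rewrite -normr_eq0 -Hb normr_eq0.
have cn0 : c != 0 by rewrite -normr_eq0 -Hc normr_eq0.
set s := `|a| ^+ 2.
have ca : a^* = s / a by rewrite /s normCK mulrAC divff ?mul1r.
have cb : b^* = s / b by rewrite /s Hb normCK mulrAC divff ?mul1r.
have cc : c^* = s / c by rewrite /s Hc normCK mulrAC divff ?mul1r.
rewrite !(rmorphN, rmorphD, rmorphM) /= ca cb cc.
by field; rewrite an0 bn0 cn0.
Qed.
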